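(* Let $p$ be a prime, $s\geq3$, $n\geq1$, $K\in\{\mathbb Z,\mathbb Z_p,\mathbb Z_{(p)}\}$, $F$ a field containing $K$, and $G=\langle a\rangle\cong C_{p^s}$. Let $\Delta$ be the $K$-representation of $G$ given by $\Delta(a)=\begin{pmatrix}\Delta_1(a)&U(a)\\0&\Delta_2(a)\end{pmatrix}$, where $\Delta_1=\delta_0^{(n)}\oplus\delta_1^{(n)}$, $\Delta_2=\delta_2^{(n)}\oplus\delta_s^{(n)}$, and $U(a)=\begin{pmatrix}E_n\otimes\langle1\rangle_0&J_n\otimes\langle1\rangle_0\\ E_n\otimes\langle1\rangle_1&J_n\otimes\langle1\rangle_1\end{pmatrix}$. Let $M_\Delta=K^N$ be the corresponding lattice with standard basis, let $v$ be the first basis vector, and define $T_\Delta:G\to\widehat{M_\Delta}$ by $T_\Delta(a^j)=jp^{-s}v+M_\Delta$ for $j=0,1,\dots,p^s-1$. Then $T_\Delta$ is a $1$-cocycle, and $T_\Delta$ is not cohomologous to zero at the element $b=a^{p^{s-1}}$ of order $p$, i.e. there is no $x\in FM_\Delta$ with $T_\Delta(b)=(b-1)x+M_\Delta$.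
   Context: For $t\geq0$ let $K_t=K[x]/(\Phi_{p^t}(x))$ ($\Phi_{p^t}$ the $p^t$-th cyclotomic polynomial; $K_0=K$), $\xi_t$ the image of $x$ (a primitive $p^t$-th root of unity), so $\xi_{t-1}=\xi_t^p$. Define ordered $K$-bases $B_0=\{1\}$, $B_1=(1,\xi_1,\dots,\xi_1^{p-2})$, and for $j\geq2$, $B_j$ is the concatenation of $\xi_j^0B_{j-1},\xi_j^1B_{j-1},\dots,\xi_j^{p-1}B_{j-1}$. For $t\leq s$, $\delta_t$ is the matrix representation of $G$ on $K_t$ (with $a$ acting as multiplication by $\xi_t$) in the basis $B_t$ (columns = coordinates of images of basis vectors); $\delta_t^{(n)}$ is the direct sum of $n$ copies. $E_n$ is the identity and $J_n$ the $n\times n$ Jordan block with ones on the diagonal (and superdiagonal). For $\omega\in K_t$ ($t=0,1$), $\langle\omega\rangle_t$ denotes the matrix with $|B_t|$ rows all of whose columns are zero except the last, which is the coordinate column of $\omega$ in $B_t$; in $E_n\otimes\langle\cdot\rangle_t$ its number of columns is $\deg\delta_2$, in $J_n\otimes\langle\cdot\rangle_t$ it is $\deg\delta_s$. $FM=F\otimes_KM$, $\widehat M=FM/M$ with $g(x+M)=gx+M$; a $1$-cocycle is $T:G\to\widehat M$ with $T(gh)=gT(h)+T(g)$. *)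

(* Defs.v *)
From HB Require Import structures.
From mathcomp Require Import all_boot all_order all_algebra.
From mathcomp Require Import cyclotomic.
From mathcomp Require Import mxtens.
Set Implicit Arguments. Unset Strict Implicit. Unset Printing Implicit Defensive.
Import Order.TTheory GRing.Theory Num.Theory.
Local Open Scope ring_scope.

(* deg delta_t = [K_t : K] = phi(p^t) (= 1 for t = 0) *)
Definition dg (p t : nat) : nat := totient (p ^ t).

(* bexp p t i = the exponent e such that the i-th element of the ordered basis
   B_t is xi_t^e.  B_0 = (1), B_1 = (1, xi_1, ..., xi_1^(p-2)), and for t >= 2
   B_t = xi_t^0 B_(t-1) ++ ... ++ xi_t^(p-1) B_(t-1), where xi_(t-1) = xi_t^p. *)
Fixpoint bexp (p t i : nat) {struct t} : nat :=
  match t with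
  | 0 => 0
  | t'.+1 => if t' is 0 then i
             else (i %/ dg p t' + p * bexp p t' (i %% dg p t'))%N
  end.

(* coordinate column of (the class of) w in K_t = K[x]/(Phi_(p^t)), basis B_t *)
Definition coordB (p t : nat) (w : {poly int}) : 'cV[int]_(dg p t) :=
  \col_i ((w %% 'Phi_(p ^ t))`_(bexp p t i)).

(* delta_t(a): multiplication by xi_t on K_t in the basis B_t
   (columns = coordinates of the images of the basis vectors) *)
Definition delta (p t : nat) : 'M[int]_(dg p t) :=
  \matrix_(i, j) (coordB p t ('X ^+ (bexp p t j).+1) i 0).

Definition angle (p t : nat) (w : {poly int}) (c : nat) : 'M[int]_(dg p t, c) :=
  \matrix_(i, j) (if val j == c.-1 then coordB p t w i 0 else 0).

Definition jordan (n : nat) : 'M[int]_n :=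
  \matrix_(i, j) (if (val i == val j) || ((val i).+1 == val j) then 1 else 0).

Definition deltan (p t n : nat) : 'M[int]_(n * dg p t) :=
  (1%:M : 'M[int]_n) *t delta p t.

Definition Delta1 (p n : nat) := block_mx (deltan p 0 n) 0 0 (deltan p 1 n).
Definition Delta2 (p s n : nat) := block_mx (deltan p 2 n) 0 0 (deltan p s n).

Definition Umx (p s n : nat) :
  'M[int]_(n * dg p 0 + n * dg p 1, n * dg p 2 + n * dg p s) :=
  block_mx ((1%:M : 'M[int]_n) *t angle p 0 1 (dg p 2))
           (jordan n *t angle p 0 1 (dg p s))
           ((1%:M : 'M[int]_n) *t angle p 1 1 (dg p 2))
           (jordan n *t angle p 1 1 (dg p s)).

Definition Ndim (p s n : nat) : nat :=
  ((n * dg p 0 + n * dg p 1) + (n * dg p 2 + n * dg p s))%N.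

Definition DeltaA (p s n : nat) : 'M[int]_(Ndim p s n) :=
  block_mx (Delta1 p n) (Umx p s n) 0 (Delta2 p s n).

Definition isZ (F : fieldType) (K : F -> Prop) : Prop :=
  forall x, K x <-> exists z : int, x = z%:~R.

Definition isZloc (p : nat) (F : fieldType) (K : F -> Prop) : Prop :=
  forall x, K x <-> exists a b : int, ~~ (p%:Z %| b)%Z /\ x = a%:~R / b%:~R.

(* K is (a copy of) the ring Z_p of p-adic integers inside F: a subring such
   that K / p^k K = Z / p^k Z for all k (p not a unit, residues represented by
   integers), which is p-adically separated and complete; these properties
   characterize Z_p = lim Z/p^k Z up to isomorphism. *)
Definition isZpadic (p : nat) (F : fieldType) (K : F -> Prop) : Prop :=
  [/\ [/\ K 1, (forall x y, K x -> K y -> K (x - y)) &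
          (forall x y, K x -> K y -> K (x * y))],
      ~ K (p%:R)^-1,
      (forall x, K x -> exists i : int, K ((x - i%:~R) / p%:R)),
      (forall x, K x -> (forall k, K (x / (p ^ k)%:R)) -> x = 0) &
      (forall c : nat -> F, (forall k, K (c k)) ->
         (forall k, K ((c k.+1 - c k) / (p ^ k)%:R)) ->
         exists2 y, K y & forall k, K ((y - c k) / (p ^ k)%:R))].

Definition Kspec (p : nat) (F : fieldType) (K : F -> Prop) : Prop :=
  isZ K \/ isZloc p K \/ isZpadic p K.

Definition vfirst (F : fieldType) (N : nat) : 'cV[F]_N :=
  \col_i (if val i == 0%N then 1 else 0).

(* T_Delta(a^j) = j p^(-s) v  (representative in F M_Delta), 0 <= j < p^s;
   general exponents are reduced mod p^s *)
Definition Tdelta (F : fieldType) (p s n : nat) (j : nat) : 'cV[F]_(Ndim p s n) :=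
  (((j %% p ^ s)%N)%:R / (p ^ s)%:R) *: vfirst F (Ndim p s n).

Definition inM (F : fieldType) (K : F -> Prop) (N : nat) (x : 'cV[F]_N) : Prop :=
  forall i, K (x i 0).

Definition DeltaF (F : fieldType) (p s n : nat) : 'M[F]_(Ndim p s n) :=
  map_mx intr (DeltaA p s n).

(* Main.v *)
Require Import Defs.
From HB Require Import structures.
From mathcomp Require Import all_boot all_order all_algebra.
From mathcomp Require Import cyclotomic mxtens zify ring.
Import Order.TTheory GRing.Theory Num.Theory.
Local Open Scope ring_scope.

Lemma geom (R : comPzRingType) (z : R) l :
  (z - 1) * \sum_(i < l) z ^+ i = z ^+ l - 1.
Proof.
elim: l => [|l IH]; first by rewrite big_ord0 mulr0 expr0 subrr.
by rewrite big_ord_recr /= mulrDr IH mulrBl mul1r -exprS addrC addrA subrK.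
Qed.

Lemma prodPhi p t : prime p ->
  \prod_(j < t.+1) 'Phi_(p ^ j) = 'X^(p ^ t) - 1 :> {poly int}.
Proof.
move=> pr; have p0 := prime_gt0 pr; have p1 := prime_gt1 pr.
rewrite -prod_Cyclotomic ?expn_gt0 ?p0 //.
rewrite (perm_big [seq p ^ j | j <- iota 0 t.+1])%N; last first.
  apply: uniq_perm; first exact: divisors_uniq.
    rewrite map_inj_uniq ?iota_uniq //; exact: expnI.
  move=> d; rewrite -dvdn_divisors ?expn_gt0 ?p0 //.
  apply/(dvdn_pfactor _ _ pr)/mapP => [[j jt ->]|[j]].
    by exists j => //; rewrite mem_iota add0n ltnS.
  by rewrite mem_iota add0n ltnS => jt ->; exists j.
by rewrite big_map -(big_mkord xpredT (fun j => 'Phi_(p ^ j))).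
Qed.

Lemma Phi1 : 'Phi_1 = 'X - 1 :> {poly int}.
Proof. by have := prod_Cyclotomic (isT : (0 < 1)%N); rewrite big_seq1 expr1. Qed.

Lemma PhiS p t : prime p ->
  'Phi_(p ^ t.+1) * ('X^(p ^ t) - 1) = 'X^(p ^ t.+1) - 1 :> {poly int}.
Proof.
move=> pr; rewrite -!prodPhi // (big_ord_recr t.+1) /= mulrC; congr (_ * _).
Qed.

Lemma PhiG p t : prime p ->
  'Phi_(p ^ t.+1) = \sum_(k < p) ('X^(p ^ t)) ^+ k :> {poly int}.
Proof.
move=> pr; apply: (@mulIf _ ('X^(p ^ t) - 1)).
  by rewrite -size_poly_eq0 size_Xn_sub_1 // expn_gt0 prime_gt0.
by rewrite PhiS // mulrC geom -exprM expnSr.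
Qed.

Lemma dg_gt0 p t : prime p -> (0 < dg p t)%N.
Proof. by move=> pr; rewrite /dg totient_gt0 expn_gt0 prime_gt0. Qed.

Lemma dg0 p : dg p 0 = 1%N.
Proof. by []. Qed.

Lemma dg1 p : prime p -> dg p 1 = p.-1.
Proof. by move=> pr; rewrite /dg totient_pfactor // muln1. Qed.

Lemma dgS p t : prime p -> dg p t.+2 = (p * dg p t.+1)%N.
Proof. by move=> pr; rewrite /dg !totient_pfactor //= expnS; lia. Qed.

Lemma bexpSS p t i : bexp p t.+2 i = (i %/ dg p t.+1 + p * bexp p t.+1 (i %% dg p t.+1))%N.
Proof. by []. Qed.

Lemma bexp_lt p t i : prime p -> (i < dg p t)%N -> (bexp p t i < dg p t)%N.
Proof.
move=> pr; elim: t i => [|[|t] IH] i //.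
move=> hi; rewrite bexpSS; rewrite dgS // in hi *.
have d0 := dg_gt0 p t.+1 pr.
have q : (i %/ dg p t.+1 < p)%N by rewrite ltn_divLR // mulnC.
have e : (bexp p t.+1 (i %% dg p t.+1) < dg p t.+1)%N by apply: IH; rewrite ltn_mod.
nia.
Qed.

Lemma bexp_inj p t i j : prime p -> (i < dg p t)%N -> (j < dg p t)%N ->
  bexp p t i = bexp p t j -> i = j.
Proof.
move=> pr; elim: t i j => [|[|t] IH] i j.
- by rewrite dg0 !ltnS !leqn0 => /eqP -> /eqP ->.
- by [].
rewrite !bexpSS dgS // => hi hj E.
have d0 := dg_gt0 p t.+1 pr.
have qi : (i %/ dg p t.+1 < p)%N by rewrite ltn_divLR // mulnC.
have qj : (j %/ dg p t.+1 < p)%N by rewrite ltn_divLR // mulnC.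
have : ((bexp p t.+1 (i %% dg p t.+1)%N, (i %/ dg p t.+1)%N) ==
        (bexp p t.+1 (j %% dg p t.+1)%N, (j %/ dg p t.+1)%N)).
  by rewrite -(mxtens.eq_addl_mul _ _ qi qj) !(mulnC _ p) addnC E addnC.
case/eqP => Er Eq.
have := IH _ _ (ltn_pmod _ d0) (ltn_pmod _ d0) Er => Emod.
by rewrite (divn_eq i (dg p t.+1)) (divn_eq j (dg p t.+1)) Eq Emod.
Qed.

Section Coord.
Variables (p t : nat).
Hypothesis pr : prime p.
Local Notation Phi := ('Phi_(p ^ t) : {poly int}).
Local Notation d := (dg p t).

Lemma ulc : lead_coef Phi \is a GRing.unit.
Proof. by rewrite (monicP (Cyclotomic_monic _)) unitr1. Qed.

Lemma sizePhi : size Phi = d.+1.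
Proof. exact: size_Cyclotomic. Qed.

Lemma Phi_neq0 : Phi != 0.
Proof. by rewrite -size_poly_eq0 sizePhi. Qed.

Lemma coordBE w i : coordB p t w i 0 = (w %% Phi)`_(bexp p t i).
Proof. by rewrite mxE. Qed.

Lemma coordBD w1 w2 : coordB p t (w1 + w2) = coordB p t w1 + coordB p t w2.
Proof.
by apply/matrixP => i j; rewrite !mxE (Pdiv.IdomainUnit.modpD ulc) coefD.
Qed.

Lemma coordBZ (c : int) w : coordB p t (c *: w) = c *: coordB p t w.
Proof.
by apply/matrixP => i j; rewrite !mxE (Pdiv.IdomainUnit.modpZl ulc) coefZ.
Qed.

Lemma coordB0 : coordB p t 0 = 0.
Proof. by apply/matrixP => i j; rewrite !mxE Pdiv.CommonIdomain.mod0p coef0. Qed.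

Lemma coordB_sum (I : Type) (r : seq I) (P : pred I) (f : I -> {poly int}) :
  coordB p t (\sum_(i <- r | P i) f i) = \sum_(i <- r | P i) coordB p t (f i).
Proof. exact: (big_morph _ coordBD coordB0). Qed.

Lemma coordB_mod w : coordB p t (w %% Phi) = coordB p t w.
Proof. by apply/matrixP => i j; rewrite !mxE Pdiv.CommonIdomain.modp_id. Qed.

Lemma coordB_addM w h : coordB p t (w + h * Phi) = coordB p t w.
Proof. by rewrite coordBD -(coordB_mod (h * Phi)) Pdiv.CommonIdomain.modp_mull coordB0 addr0. Qed.

Lemma coordB_eq w1 w2 h : w1 = w2 + h * Phi -> coordB p t w1 = coordB p t w2.
Proof. by move=> ->; rewrite coordB_addM. Qed.

Lemma coordB_Xe e i : (e < d)%N -> coordB p t 'X^e i 0 = (bexp p t i == e)%:R.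
Proof.
move=> he; rewrite coordBE Pdiv.CommonIdomain.modp_small ?coefXn //.
by rewrite size_polyXn sizePhi.
Qed.

Lemma coordB_unit (j : 'I_d) : coordB p t 'X^(bexp p t j) = delta_mx j 0.
Proof.
apply/matrixP => i k; rewrite ord1 coordB_Xe ?bexp_lt // !mxE eqxx andbT.
have -> : (bexp p t i == bexp p t j) = (i == j) => //.
apply/eqP/eqP => [/(@bexp_inj p t i j pr (ltn_ord i) (ltn_ord j))/val_inj //|-> //].
Qed.

Definition bexpo (j : 'I_d) : 'I_d := Ordinal (@bexp_lt p t j pr (ltn_ord j)).

Lemma bexpo_inj : injective bexpo.
Proof.
by move=> i j /(congr1 val) /= /(@bexp_inj p t i j pr (ltn_ord i) (ltn_ord j)) /val_inj.
Qed.

Lemma recon w : \sum_(j < d) coordB p t w j 0 *: 'X^(bexp p t j) = w %% Phi.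
Proof.
have -> : w %% Phi = \sum_(e < d) (w %% Phi)`_e *: 'X^e.
  rewrite -poly_def; apply/polyP => k; rewrite coef_poly.
  case: ltnP => // hk; rewrite nth_default //.
  apply: leq_trans hk; rewrite -ltnS -sizePhi Pdiv.CommonIdomain.ltn_modp.
  exact: Phi_neq0.
rewrite [RHS](reindex_inj bexpo_inj) /=.
by apply: eq_bigr => j _; rewrite coordBE.
Qed.

Lemma coordB_modE w : coordB p t w = coordB p t (w %% Phi).
Proof. by rewrite coordB_mod. Qed.

Lemma coordB_mulmod q w : coordB p t (q * (w %% Phi)) = coordB p t (q * w).
Proof.
symmetry; apply: (@coordB_eq _ _ (q * (w %/ Phi))).
by rewrite {1}(Pdiv.IdomainUnit.divp_eq ulc w) mulrDr addrC mulrA.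
Qed.

Lemma delta_coordB w : delta p t *m coordB p t w = coordB p t ('X * w).
Proof.
rewrite -coordB_mulmod -recon mulr_sumr coordB_sum.
apply/matrixP => i k; rewrite ord1 summxE mxE.
apply: eq_bigr => j _; rewrite -scalerAr coordBZ [in RHS]mxE mulrC -exprS.
by rewrite [delta _ _ _ _]mxE.
Qed.

Definition Fv (u : 'rV[int]_d) (w : {poly int}) : int := (u *m coordB p t w) 0 0.

Lemma Fv_delta u w : Fv (u *m delta p t) w = Fv u ('X * w).
Proof. by rewrite /Fv -mulmxA delta_coordB. Qed.

Lemma Fv_unit u (j : 'I_d) : Fv u 'X^(bexp p t j) = u 0 j.
Proof.
rewrite /Fv coordB_unit mxE (bigD1 j) //= mxE !eqxx mulr1 big1 ?addr0 //.
by move=> i /negbTE ij; rewrite mxE ij mulr0.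
Qed.

Lemma rv_eq u v : (forall j : 'I_d, Fv u 'X^(bexp p t j) = Fv v 'X^(bexp p t j)) -> u = v.
Proof. by move=> H; apply/matrixP => i j; rewrite ord1 -!Fv_unit H. Qed.

Lemma FvD u w1 w2 : Fv u (w1 + w2) = Fv u w1 + Fv u w2.
Proof. by rewrite /Fv coordBD mulmxDr mxE. Qed.

Lemma FvZ u (c : int) w : Fv u (c *: w) = c * Fv u w.
Proof. by rewrite /Fv coordBZ -scalemxAr mxE. Qed.

Lemma Fv_sum u (I : Type) (r : seq I) (P : pred I) (f : I -> {poly int}) :
  Fv u (\sum_(i <- r | P i) f i) = \sum_(i <- r | P i) Fv u (f i).
Proof.
rewrite /Fv coordB_sum mulmx_sumr summxE; exact: eq_bigr.
Qed.

Lemma Fv_eq u w1 w2 h : w1 = w2 + h * Phi -> Fv u w1 = Fv u w2.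
Proof. by move=> E; rewrite /Fv (@coordB_eq _ _ _ E). Qed.

Lemma FvuD u v w : Fv (u + v) w = Fv u w + Fv v w.
Proof. by rewrite /Fv mulmxDl mxE. Qed.

Lemma FvuZ (c : int) u w : Fv (c *: u) w = c * Fv u w.
Proof. by rewrite /Fv -scalemxAl mxE. Qed.

End Coord.

Definition lastrow (c : nat) : 'rV[int]_c := \row_j (val j == c.-1)%:R.

Lemma angleE p t w c : angle p t w c = coordB p t w *m lastrow c.
Proof. by apply/matrixP => i j; rewrite !mxE big_ord1 !mxE; case: eqP; rewrite ?mulr1 ?mulr0. Qed.

Lemma mul_angle p t (u : 'rV[int]_(dg p t)) w c :
  u *m angle p t w c = Fv p t u w *: lastrow c.
Proof. by rewrite angleE mulmxA [u *m _]mx11_scalar mul_scalar_mx. Qed.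

Lemma tensmxDr {m n p q : nat} (A : 'M[int]_(m, n)) (B C : 'M[int]_(p, q)) :
  A *t (B + C) = A *t B + A *t C.
Proof. by apply/matrixP => i j; rewrite !mxE mulrDr. Qed.

Section Blocks.
Variables p s n : nat.
Local Notation N := n.+1.

Definition e0 : 'rV[int]_N := delta_mx 0 0.
Definition jr : 'rV[int]_N := e0 *m jordan N.

Definition build (a0 : 'rV_(dg p 0)) (a1 : 'rV_(dg p 1))
  (b2 : 'rV_(dg p 2)) (bs : 'rV_(dg p s)) : 'rV[int]_(Ndim p s N) :=
  row_mx (row_mx (e0 *t a0) (e0 *t a1)) (row_mx (e0 *t b2) (jr *t bs)).

Lemma build_step a0 a1 b2 bs :
  build a0 a1 b2 bs *m DeltaA p s N =
  build (a0 *m delta p 0) (a1 *m delta p 1)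
    (a0 *m angle p 0 1 (dg p 2) + a1 *m angle p 1 1 (dg p 2) + b2 *m delta p 2)
    (a0 *m angle p 0 1 (dg p s) + a1 *m angle p 1 1 (dg p s) + bs *m delta p s).
Proof.
rewrite /build /DeltaA /Delta1 /Delta2 /Umx /deltan.
rewrite !mul_row_block !mulmx0 !addr0 !add0r.
rewrite (tensmx_mul e0 a0 1%:M (delta p 0)) (tensmx_mul e0 a1 1%:M (delta p 1)).
rewrite (tensmx_mul e0 a0 1%:M (angle p 0 1 (dg p 2))) (tensmx_mul e0 a1 1%:M (angle p 1 1 (dg p 2))).
rewrite (tensmx_mul e0 a0 (jordan N) (angle p 0 1 (dg p s))) (tensmx_mul e0 a1 (jordan N) (angle p 1 1 (dg p s))).
rewrite (tensmx_mul e0 b2 1%:M (delta p 2)) (tensmx_mul jr bs 1%:M (delta p s)).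
rewrite !mulmx1 -/jr add_row_mx.
by rewrite !(tensmxDr e0) !(tensmxDr jr).
Qed.

End Blocks.

Definition G (z : {poly int}) (l : nat) := \sum_(i < l) z ^+ i.

Lemma GS z l : G z l.+1 = 1 + z * G z l.
Proof.
by rewrite /G big_ord_recl expr0 mulr_sumr; congr (_ + _); apply: eq_bigr => i _; rewrite exprS.
Qed.

Lemma geomG z l : (z - 1) * G z l = z ^+ l - 1.
Proof. exact: geom. Qed.

Lemma Xn_sub1_neq0 k : (0 < k)%N -> ('X^k - 1 : {poly int}) != 0.
Proof. by move=> k0; rewrite -size_poly_eq0 size_Xn_sub_1. Qed.

Section PolyFacts.
Variable p : nat.
Hypothesis pr : prime p.

Lemma p_gt0 : (0 < p)%N. Proof. exact: prime_gt0. Qed.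

Lemma XpqE q : exists h : {poly int}, ('X^p) ^+ q = 1 + h * 'Phi_(p ^ 1).
Proof.
exists ((- 1 + 'X) * G 'X^p q).
have := PhiS p 0 pr; rewrite expn0 expn1 => E.
transitivity (1 + (('X^p : {poly int}) ^+ q - 1)); first ring.
rewrite -(geomG 'X^p q) -E expr1; ring.
Qed.

Lemma Xk1E k : exists h : {poly int}, 'X^k = 1 + h * 'Phi_(p ^ 0).
Proof.
exists (G 'X k); rewrite expn0 Phi1 mulrC geomG; ring.
Qed.

Lemma XkmodE k : exists h : {poly int}, 'X^k = 'X^(k %% p)%N + h * 'Phi_(p ^ 1).
Proof.
have [h Eh] := XpqE (k %/ p)%N.
exists ('X^(k %% p)%N * h).
by rewrite {1}(divn_eq k p) exprD mulnC exprM Eh; ring.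
Qed.

Lemma XpminusE : 'X^(p.-1) = - \sum_(j < p.-1) 'X^j + 1 * 'Phi_(p ^ 1).
Proof.
rewrite (PhiG p 0 pr) expn0 expr1.
have E : forall q, \sum_(k < q.+1) ('X : {poly int}) ^+ k = \sum_(j < q) 'X^j + 'X^q.
  by move=> q; rewrite big_ord_recr.
have := E p.-1; rewrite prednK ?p_gt0 // => ->; ring.
Qed.

End PolyFacts.

Section CC.
Variable p : nat.
Hypothesis pr : prime p.

Definition a00 : 'rV[int]_(dg p 0) := const_mx 1.
Definition a10 : 'rV[int]_(dg p 1) := const_mx (-1).

Lemma Fv_const t (c : int) w : Fv p t (const_mx c) w = c * \sum_(j < dg p t) coordB p t w j 0.
Proof. by rewrite /Fv mxE mulr_sumr; apply: eq_bigr => j _; rewrite mxE. Qed.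

Lemma FvN t u w : Fv p t u (- w) = - Fv p t u w.
Proof. by rewrite -scaleN1r FvZ mulN1r. Qed.

Lemma Fv_a00 k : Fv p 0 a00 'X^k = 1.
Proof.
have [h Eh] := Xk1E p k.
rewrite (Fv_eq _ _ _ _ _ _ Eh) Fv_const mul1r -(expr0 'X).
rewrite (eq_bigr (fun _ => 1)); first by rewrite sumr_const card_ord.
by move=> j _; rewrite coordB_Xe.
Qed.

Lemma dvd_mod k : (p %| k.+1)%N -> (k %% p).+1 = p.
Proof.
move=> dv; have p0 := prime_gt0 pr.
apply/anti_leq; rewrite ltn_pmod // dvdn_leq //.
by rewrite -(dvdn_addr _ (dvdn_mull (k %/ p) (dvdnn p))) addnS -divn_eq.
Qed.

Lemma dvd_modE k : (p %| k.+1)%N = (k %% p == p.-1)%N.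
Proof.
have p0 := prime_gt0 pr.
apply/idP/eqP => [/dvd_mod E| E]; first by rewrite -[in RHS]E.
have -> : k.+1 = (k %/ p * p + (k %% p).+1)%N by rewrite addnS -divn_eq.
by rewrite E prednK // dvdn_add ?dvdn_mull.
Qed.

Lemma Fv_a10_small r : (r < p.-1)%N -> Fv p 1 a10 'X^r = -1.
Proof.
move=> hr; rewrite -(dg1 _ pr) in hr.
have := Fv_unit _ _ pr a10 (Ordinal (hr : (r < dg p 1)%N)).
by rewrite mxE /= => ->.
Qed.

Lemma Fv_a10 k : Fv p 1 a10 'X^k = if (p %| k.+1)%N then (p.-1)%:Z else -1.
Proof.
have [h Eh] := XkmodE p pr k.
rewrite (Fv_eq _ _ _ _ _ _ Eh) dvd_modE.
have p0 := prime_gt0 pr.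
have : (k %% p < p)%N by rewrite ltn_mod.
case: eqP => [->|ne] hk; last first.
  move: hk ne; set r := (k %% p)%N => hk ne; apply: Fv_a10_small; lia.
rewrite (Fv_eq _ _ _ _ _ _ (XpminusE p pr)) FvN Fv_sum.
rewrite (eq_bigr (fun _ => -1)); last by move=> j _; apply: Fv_a10_small.
rewrite sumr_const card_ord mulNrn opprK.
by rewrite natz.
Qed.

Definition cc (k : nat) : int := if (p %| k.+1)%N then p%:Z else 0.

Lemma ccE k : Fv p 0 a00 'X^k + Fv p 1 a10 'X^k = cc k.
Proof.
rewrite Fv_a00 Fv_a10 /cc; case: ifP => _; last by rewrite subrr.
have := prime_gt0 pr; lia.
Qed.

Fixpoint Pc (k : nat) : {poly int} :=
  if k is k'.+1 then (cc k')%:P + Pc k' * 'X else 0.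

Lemma PcE k : Pc k = p%:R * (G 'X^p (k %/ p) * 'X^(k %% p)).
Proof.
have p0 := prime_gt0 pr.
elim: k => [|k IH]; first by rewrite div0n /G big_ord0 mul0r mulr0.
rewrite /= IH /cc divnS // modnS; case: ifP => dv.
  have EX : 'X^p = 'X^(k %% p)%N * 'X :> {poly int} by rewrite -exprSr dvd_mod.
  rewrite add1n GS expr0 mulr1 EX.
  rewrite -natz rmorph_nat; ring.
rewrite add0n exprS polyC0; ring.
Qed.

End CC.

Lemma Fv_mulmod p t (pr : prime p) u q w :
  Fv p t u (q * (w %% 'Phi_(p ^ t))) = Fv p t u (q * w).
Proof. by rewrite /Fv coordB_mulmod. Qed.

Lemma Fv0u p t w : Fv p t 0 w = 0.
Proof. by rewrite /Fv mul0mx mxE. Qed.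

Lemma Fvu0 p t u : Fv p t u 0 = 0.
Proof. by rewrite -(scale0r 0) FvZ mul0r. Qed.

Section Seq.
Variables p s n : nat.
Hypothesis pr : prime p.
Hypothesis hs : (3 <= s)%N.
Local Notation m := (p ^ s.-1)%N.

Definition Spoly : {poly int} := G 'X^p (p ^ s.-2).
Definition Qp (z : {poly int}) := \sum_(k < p) G z k.
Definition Hpoly := Qp 'X^m * Spoly.
Local Notation L t := (lastrow (dg p t)).
Definition b0 : 'rV[int]_(dg p s) := \row_j Fv p s (L s) (Hpoly * 'X^(bexp p s j)).

Lemma Fv_b0 w : Fv p s b0 w = Fv p s (L s) (Hpoly * w).
Proof.
rewrite -(Fv_mulmod _ _ pr) -(recon _ _ pr) mulr_sumr Fv_sum /Fv mxE.
apply: eq_bigr => j _; rewrite mxE -scalerAr coordBZ -scalemxAr mxE mulrC.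
by rewrite [in RHS]mxE.
Qed.

Lemma FS : exists h, Spoly = h * 'Phi_(p ^ 2).
Proof.
have p0 := prime_gt0 pr.
rewrite /Spoly; case: s hs => [|[|[|s']]] // _ /=.
exists (G ('X^(p ^ 2)) (p ^ s')).
have ne : ('X^p - 1 : {poly int}) != 0 by apply: Xn_sub1_neq0.
apply: (mulfI ne); rewrite geomG -exprM.
have E := PhiS p 1 pr; rewrite expn1 in E.
rewrite (mulrC (G _ _)) mulrA (mulrC _ 'Phi_(p ^ 2)) E geomG -exprM.
by rewrite -expnS -expnD add2n.
Qed.

Lemma FH : Hpoly * 'X^m + p%:R * Spoly = Hpoly + Spoly * 'Phi_(p ^ s).
Proof.
have s0 : s = s.-1.+1 by case: s hs.
have EPhi : 'Phi_(p ^ s) = G 'X^m p by rewrite /G {1}s0 (PhiG p s.-1 pr).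
have EQ : Qp 'X^m * ('X^m - 1) = G 'X^m p - p%:R.
  rewrite /Qp mulr_suml (eq_bigr (fun k : 'I_p => 'X^m ^+ k - 1)).
    by rewrite sumrB sumr_const card_ord.
  by move=> k _; rewrite mulrC geomG.
apply/eqP; rewrite -subr_eq0 EPhi /Hpoly.
rewrite (_ : _ - _ = Spoly * (Qp 'X^m * ('X^m - 1) - (G 'X^m p - p%:R))); last by ring.
by rewrite EQ subrr mulr0.
Qed.

Definition State := (('rV[int]_(dg p 0) * 'rV[int]_(dg p 1)) *
                     ('rV[int]_(dg p 2) * 'rV[int]_(dg p s)))%type.

Definition stepf (x : State) : State :=
  let: ((a0, a1), (b2, bs)) := x in
  ((a0 *m delta p 0, a1 *m delta p 1),
   (a0 *m angle p 0 1 (dg p 2) + a1 *m angle p 1 1 (dg p 2) + b2 *m delta p 2,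
    a0 *m angle p 0 1 (dg p s) + a1 *m angle p 1 1 (dg p s) + bs *m delta p s)).

Definition x0 : State := ((a00 p, a10 p), (0, b0)).
Definition st k := iter k stepf x0.
Definition bld (x : State) : 'rV[int]_(Ndim p s n.+1) :=
  let: ((a0, a1), (b2, bs)) := x in build p s n a0 a1 b2 bs.

Lemma bld_step x : bld (stepf x) = bld x *m DeltaA p s n.+1.
Proof. by case: x => [[a0 a1] [b2 bs]]; rewrite /= build_step. Qed.

Lemma bld_pow k : bld x0 *m DeltaA p s n.+1 ^+ k = bld (st k).
Proof.
elim: k => [|k IH]; first by rewrite expr0 mulmx1.
by rewrite exprSr -mulmxE mulmxA IH /st iterS bld_step.
Qed.

Lemma st_a0 k : (st k.+1).1.1 = (st k).1.1 *m delta p 0.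
Proof. by rewrite /st iterS; case: (iter k stepf x0) => [[? ?] [? ?]]. Qed.
Lemma st_a1 k : (st k.+1).1.2 = (st k).1.2 *m delta p 1.
Proof. by rewrite /st iterS; case: (iter k stepf x0) => [[? ?] [? ?]]. Qed.
Lemma st_b2 k : (st k.+1).2.1 = (st k).1.1 *m angle p 0 1 (dg p 2) +
   (st k).1.2 *m angle p 1 1 (dg p 2) + (st k).2.1 *m delta p 2.
Proof. by rewrite /st iterS; case: (iter k stepf x0) => [[? ?] [? ?]]. Qed.
Lemma st_bs k : (st k.+1).2.2 = (st k).1.1 *m angle p 0 1 (dg p s) +
   (st k).1.2 *m angle p 1 1 (dg p s) + (st k).2.2 *m delta p s.
Proof. by rewrite /st iterS; case: (iter k stepf x0) => [[? ?] [? ?]]. Qed.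

Lemma Fv_a0 k w : Fv p 0 (st k).1.1 w = Fv p 0 (a00 p) ('X^k * w).
Proof.
elim: k w => [|k IH] w; first by rewrite expr0 mul1r.
by rewrite st_a0 (Fv_delta _ _ pr) IH mulrA -exprSr.
Qed.

Lemma Fv_a1 k w : Fv p 1 (st k).1.2 w = Fv p 1 (a10 p) ('X^k * w).
Proof.
elim: k w => [|k IH] w; first by rewrite expr0 mul1r.
by rewrite st_a1 (Fv_delta _ _ pr) IH mulrA -exprSr.
Qed.

Lemma Fv_gen t (bk : nat -> 'rV[int]_(dg p t)) :
  (forall k, bk k.+1 = cc p k *: L t + bk k *m delta p t) ->
  forall k w, Fv p t (bk k) w = Fv p t (bk 0) ('X^k * w) + Fv p t (L t) (Pc p k * w).
Proof.
move=> H; elim=> [|k IH] w; first by rewrite expr0 mul1r /= mul0r Fvu0 addr0.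
rewrite H FvuD FvuZ (Fv_delta _ _ pr) IH /= mulrDl FvD mul_polyC FvZ.
rewrite mulrA -exprSr -mulrA (mulrC 'X) mulrA; ring.
Qed.

Lemma b2_rec k : (st k.+1).2.1 = cc p k *: L 2 + (st k).2.1 *m delta p 2.
Proof.
by rewrite st_b2 !mul_angle Fv_a0 Fv_a1 !mulr1 -scalerDl (ccE _ pr).
Qed.

Lemma bs_rec k : (st k.+1).2.2 = cc p k *: L s + (st k).2.2 *m delta p s.
Proof.
by rewrite st_bs !mul_angle Fv_a0 Fv_a1 !mulr1 -scalerDl (ccE _ pr).
Qed.

Lemma Pcm : Pc p m = p%:R * Spoly.
Proof.
rewrite (PcE _ pr) /Spoly; have p0 := prime_gt0 pr.
case: s hs => [|[|s']] // _.
rewrite (_ : (p ^ s'.+2.-1 = p ^ s' * p)%N); last by rewrite expnSr.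
by rewrite mulnK // modnMl expr0 mulr1.
Qed.

Lemma st_m : st m = x0.
Proof.
have p0 := prime_gt0 pr.
have pm : (p %| m)%N by apply: dvdn_exp => //; case: s hs => [|[|]].
case E : (st m) => [[a0 a1] [b2 bs]].
have Ea0 : a0 = a00 p.
  apply: (rv_eq _ _ pr) => j; rewrite -[a0]/((a0, a1, (b2, bs)).1.1) -E.
  by rewrite Fv_a0 -exprD !Fv_a00.
have Ea1 : a1 = a10 p.
  apply: (rv_eq _ _ pr) => j; rewrite -[a1]/((a0, a1, (b2, bs)).1.2) -E.
  by rewrite Fv_a1 -exprD !(Fv_a10 _ pr _) -addnS (dvdn_addr _ pm).
have Eb2 : b2 = 0.
  apply: (rv_eq _ _ pr) => j; rewrite -[b2]/((a0, a1, (b2, bs)).2.1) -E.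
  rewrite (Fv_gen _ _ b2_rec) /= Fv0u add0r Fv0u Pcm.
  have [h Eh] := FS.
  rewrite (@Fv_eq _ _ _ _ 0 (p%:R * h * 'X^(bexp p 2 j))) ?Fvu0 //.
  by rewrite Eh; ring.
have Ebs : bs = b0.
  apply: (rv_eq _ _ pr) => j; rewrite -[bs]/((a0, a1, (b2, bs)).2.2) -E.
  rewrite (Fv_gen _ _ bs_rec) /= !Fv_b0 Pcm -FvD mulrA -mulrDl FH mulrDl (mulrAC Spoly).
  exact: (Fv_eq _ _ _ _ _ _ erefl).
by rewrite Ea0 Ea1 Eb2 Ebs.
Qed.

Lemma lambda_fix : bld x0 *m DeltaA p s n.+1 ^+ m = bld x0.
Proof. by rewrite bld_pow st_m. Qed.

End Seq.

Section KLemmas.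
Variable F : fieldType.
Hypothesis c0 : [pchar F] =i pred0.

Lemma natrF_eq0 k : (k%:R == 0 :> F) = (k == 0)%N.
Proof. by move/pcharf0P: c0. Qed.

Lemma intrF_inj : injective (fun z : int => z%:~R : F).
Proof.
move=> z1 z2 /= E; apply/eqP; rewrite -subr_eq0; apply/eqP.
have : (z1 - z2)%:~R = 0 :> F by rewrite rmorphB /= E subrr.
case: (z1 - z2) => k /=.
  by move/eqP; rewrite natrF_eq0 => /eqP ->.
by rewrite NegzE rmorphN /= => /eqP; rewrite oppr_eq0 natrF_eq0.
Qed.

Definition KR (K : F -> Prop) :=
  [/\ K 1, (forall x y, K x -> K y -> K (x - y)) & (forall x y, K x -> K y -> K (x * y))].

Lemma KR0 K : KR K -> K 0.
Proof. by case=> K1 KB _; rewrite -(subrr 1); apply: KB. Qed.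

Lemma KRN K x : KR K -> K x -> K (- x).
Proof. by move=> kr Kx; case: (kr) => _ KB _; rewrite -sub0r; apply: KB => //; apply: KR0. Qed.

Lemma KRD K x y : KR K -> K x -> K y -> K (x + y).
Proof. by move=> kr Kx Ky; case: (kr) => _ KB _; rewrite -(opprK y); apply: KB => //; apply: KRN. Qed.

Lemma KRnat K k : KR K -> K k%:R.
Proof.
move=> kr; elim: k => [|k IH]; first exact: KR0.
by rewrite -addn1 natrD; apply: KRD => //; case: kr.
Qed.

Lemma KRint K (z : int) : KR K -> K z%:~R.
Proof.
move=> kr; case: z => k; first exact: KRnat.
by rewrite NegzE rmorphN /=; apply: KRN => //; apply: KRnat.
Qed.

Lemma KRsum K (I : Type) (r : seq I) (P : pred I) (f : I -> F) :
  KR K -> (forall i, P i -> K (f i)) -> K (\sum_(i <- r | P i) f i).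
Proof.
move=> kr H; apply: (big_ind K); [exact: KR0| |exact: H].
by move=> x y; apply: KRD.
Qed.

Lemma Kspec_KR p K : prime p -> Kspec p K -> KR K /\ ~ K (p%:R)^-1.
Proof.
move=> pr; have p0 : (p%:R : F) != 0 by rewrite natrF_eq0 -lt0n prime_gt0.
case=> [KZ|[KL|[KR' KnP _ _ _]]].
- split.
    split.
    + by apply/KZ; exists 1.
    + by move=> x y /KZ [a ->] /KZ [b ->]; apply/KZ; exists (a - b); rewrite rmorphB.
    + by move=> x y /KZ [a ->] /KZ [b ->]; apply/KZ; exists (a * b); rewrite rmorphM.
  move=> /KZ [z Ez].
  have : ((p%:Z * z)%:~R : F) = 1%:~R.
    by rewrite rmorphM /= -Ez -pmulrn mulfV // rmorph1.
  move/intrF_inj/(congr1 absz); rewrite abszM absz_nat /= => /eqP.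
  by rewrite muln_eq1 => /andP [/eqP p1 _]; move: pr; rewrite p1.
- have nd : forall b d : int, ~~ (p%:Z %| b)%Z -> ~~ (p%:Z %| d)%Z -> ~~ (p%:Z %| b * d)%Z.
    by move=> b d; rewrite !dvdzE abszM !absz_nat Euclid_dvdM // negb_or => -> ->.
  have nz : forall b : int, ~~ (p%:Z %| b)%Z -> (b%:~R : F) != 0.
    move=> b pb; apply/eqP => bz.
    have b0 : b = 0 by apply: intrF_inj; rewrite /= bz rmorph0.
    by move: pb; rewrite b0 dvdz0.
  split.
    split.
    + apply/KL; exists 1, 1; rewrite divr1 dvdz1 /=; split=> //.
      by rewrite (gtn_eqF (prime_gt1 pr)).
    + move=> x y /KL [a [b [pb ->]]] /KL [c [d [pd ->]]]; apply/KL.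
      exists (a * d - c * b), (b * d); split; first exact: nd.
      have := nz _ pb; have := nz _ pd.
      rewrite rmorphB !rmorphM /= => hd hb; field.
      by apply/andP.
    + move=> x y /KL [a [b [pb ->]]] /KL [c [d [pd ->]]]; apply/KL.
      exists (a * c), (b * d); split; first exact: nd.
      by rewrite !rmorphM /= invfM mulrACA.
  move=> /KL [a [b [pb Ez]]].
  have : (b%:~R : F) = p%:R * a%:~R.
    rewrite (_ : a%:~R = a%:~R / b%:~R * b%:~R); last by rewrite divfK // nz.
    by rewrite -Ez mulrA mulfV // mul1r.
  rewrite pmulrn -rmorphM => /intrF_inj Eb.
  by move: pb; rewrite /= Eb dvdz_mulr.
- by split.
Qed.

End KLemmas.

Lemma map_mxX (F : fieldType) k (A : 'M[int]_k) j :
  map_mx (intr : int -> F) (A ^+ j) = (map_mx intr A) ^+ j.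
Proof.
elim: j => [|j IH]; first by rewrite !expr0 map_mx1.
by rewrite !exprS -!mulmxE map_mxM IH.
Qed.

Section Final.
Variables p s n : nat.
Hypothesis pr : prime p.
Local Notation N := n.+1.

Definition c0col : 'cV[int]_N := delta_mx 0 0.
Definition Ecol : 'cV[int]_(Ndim p s N) :=
  col_mx (col_mx (c0col *t coordB p 0 1) 0) 0.

Lemma coordB01 : coordB p 0 ('X * 1) = coordB p 0 1.
Proof.
have [h Eh] := Xk1E p 1; rewrite mulr1; rewrite expr1 in Eh.
by apply: coordB_eq; exact: Eh.
Qed.

Lemma DeltaA_E : DeltaA p s N *m Ecol = Ecol.
Proof.
rewrite /DeltaA /Delta1 /Delta2 /Umx /deltan /Ecol.
rewrite !mul_block_col !mulmx0 !mul0mx !addr0.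
rewrite (tensmx_mul 1%:M (delta p 0) c0col (coordB p 0 1)).
by rewrite mul1mx (delta_coordB _ _ pr) coordB01.
Qed.

Lemma DeltaA_pow_E j : DeltaA p s N ^+ j *m Ecol = Ecol.
Proof.
elim: j => [|j IH]; first by rewrite expr0 mul1mx.
by rewrite exprS -mulmxE -mulmxA IH DeltaA_E.
Qed.

Lemma coordB01_entry b : coordB p 0 1 b 0 = 1.
Proof. by rewrite -(expr0 'X) coordB_Xe ?dg_gt0. Qed.

Lemma Ecol_entry i : Ecol i 0 = (val i == 0)%N%:R.
Proof.
have d0 : dg p 0 = 1%N by [].
rewrite /Ecol; case: (splitP i) => [i1 Ei | i2 Ei].
  have -> : i = lshift _ i1 by apply: val_inj.
  rewrite col_mxEu; case: (splitP i1) => [k Ek | k Ek].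
    have -> : i1 = lshift _ k by apply: val_inj.
    rewrite col_mxEu; move: Ei; rewrite Ek; case: (mxtens_indexP k) => a b.
    have e1 : forall x : 'I_1, (x == 0) = true by move=> x; rewrite (ord1 x).
    have e2 : forall b (x : 'I_1), coordB p 0 1 b x = 1.
      by move=> b' x; rewrite (ord1 x) coordB01_entry.
    rewrite mxE !mxtens_indexK /= e2 mulr1 mxE e1 andbT => _.
    have b0 : val b = 0%N.
      have : (val b < 1)%N by exact: (ltn_ord b).
      by case: (val b).
    have -> : (a * dg p 0 + b)%N = a by rewrite b0 addn0; apply: muln1.
    by [].
  have -> : i1 = rshift _ k by apply: val_inj.
  have hp := dg_gt0 p 0 pr.
  rewrite col_mxEd mxE /=; by [] || (case: eqP => //; nia).
have -> : i = rshift _ i2 by apply: val_inj.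
have hp := dg_gt0 p 0 pr.
rewrite col_mxEd mxE /=; by [] || (case: eqP => //; nia).
Qed.

Lemma lambda_E : (bld p s n (x0 p s) *m Ecol) 0 0 = 1.
Proof.
rewrite /= /build /Ecol !mul_row_col !mulmx0 !addr0.
rewrite (tensmx_mul (e0 n) (a00 p) c0col (coordB p 0 1)).
have f1 : forall (M : 'M[int]_1) (x y : 'I_1), M x y = M 0 0.
  by move=> M x y; rewrite (ord1 x) (ord1 y).
rewrite mxE f1 (f1 (a00 p *m coordB p 0 1)).
have -> : (a00 p *m coordB p 0 1) 0 0 = 1.
  by have := Fv_a00 p 0; rewrite expr0.
by rewrite /e0 /c0col mul_delta_mx mxE eqxx mulr1.
Qed.

End Final.

Theorem lemma6 (p s n : nat) (F : fieldType) (K : F -> Prop) :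
  prime p -> (3 <= s)%N -> (1 <= n)%N ->
  [pchar F] =i pred0 ->
  Kspec p K ->
  (* T_Delta is a 1-cocycle: T(a^j a^k) = a^j T(a^k) + T(a^j) in FM/M *)
  (forall j k : nat, (j < p ^ s)%N -> (k < p ^ s)%N ->
     inM K (Tdelta F p s n ((j + k) %% p ^ s)
            - (DeltaF F p s n ^+ j *m Tdelta F p s n k + Tdelta F p s n j)))
  /\
  (* T_Delta is not cohomologous to zero at b = a^(p^(s-1)) *)
  ~ (exists x : 'cV[F]_(Ndim p s n),
       inM K (Tdelta F p s n (p ^ s.-1)
              - (DeltaF F p s n ^+ (p ^ s.-1) - 1%:M) *m x)).
Proof.
move=> pr hs hn c0 Ks.
case: n hn => [//|n] _.
have [kr nKp] := @Kspec_KR F c0 p K pr Ks.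
have vE : vfirst F (Ndim p s n.+1) = map_mx intr (Ecol p s n).
  apply/matrixP => i j; rewrite ord1 [LHS]mxE [RHS]mxE Ecol_entry //.
  by case: eqP => _; rewrite ?rmorph1 ?rmorph0.
have DvE : forall j, DeltaF F p s n.+1 ^+ j *m vfirst F _ = vfirst F _.
  by move=> j; rewrite vE /DeltaF -map_mxX -map_mxM DeltaA_pow_E.
have pS0 : ((p ^ s)%:R : F) != 0.
  by rewrite natrF_eq0 // expn_eq0 negb_and -lt0n prime_gt0.
have Kv : forall i, K (vfirst F (Ndim p s n.+1) i 0).
  by move=> i; rewrite mxE; case: eqP => _; [case: kr | apply: KR0].
split.
- move=> j k hj hk i.
  rewrite /Tdelta -scalemxAr DvE modn_mod (modn_small hj) (modn_small hk).
  rewrite -!scalerDl -scalerBl mxE.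
  case: (kr) => _ _ KM; apply: KM (Kv i).
  set q := ((j + k) %/ p ^ s)%N; set r := ((j + k) %% p ^ s)%N.
  have E : (r%:R : F) = j%:R + k%:R - q%:R * (p ^ s)%:R.
    by rewrite -natrD -natrM {1}(divn_eq (j + k) (p ^ s)) natrD; ring.
  have -> : r%:R / (p ^ s)%:R - (k%:R / (p ^ s)%:R + j%:R / (p ^ s)%:R) = - (q%:R : F).
    by rewrite E; field.
  by apply: KRN => //; apply: KRnat.
- move=> [x hx].
  set z := (X in inM K X) in hx.
  set lam := map_mx (intr : int -> F) (bld p s n (x0 p s)).
  have K1 : K ((lam *m z) 0 0).
    rewrite mxE; apply: KRsum => // i _.
    case: (kr) => _ _ KM; apply: KM; last exact: hx.
    by rewrite mxE; apply: KRint.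
  have lamD : lam *m DeltaF F p s n.+1 ^+ (p ^ s.-1) = lam.
    by rewrite /lam /DeltaF -map_mxX -map_mxM lambda_fix.
  have lamv : (lam *m vfirst F _) 0 0 = 1.
    by rewrite vE /lam -map_mxM mxE lambda_E rmorph1.
  move: K1; rewrite /z /Tdelta mulmxBr -scalemxAr mulmxA mulmxBr lamD mulmx1 subrr.
  rewrite mul0mx subr0 mxE lamv mulr1.
  have p1 := prime_gt1 pr.
  have s0 : (0 < s)%N by apply: leq_trans hs.
  rewrite modn_small; last by rewrite ltn_exp2l // ltn_predL.
  have -> : (p ^ s = p ^ s.-1 * p)%N by rewrite -expnSr prednK.
  rewrite natrM invfM mulrA mulfV ?mul1r //.
  by rewrite natrF_eq0 // expn_eq0 negb_and -lt0n prime_gt0.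
Qed.
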